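(* Let $(X,p)$ and $(Y,d)$ be metric spaces with $(Y,d)$ separable, and let $F: X \Rightarrow Y$ be a multi-valued function whose graph is a $\Sigma^0_2$ subset of $X \times Y$. Let $P$ be the set of points of $X$ at which $F$ is strongly continuous. (a) If $Y$ is compact and $F(x)$ is closed for every $x \in X$, then $P$ is a $\Pi^0_2$ subset of $X$. (b) If $Y$ is exhaustible by compact sets and $F(x)$ is closed for every $x \in X$, then $P$ is a $\Sigma^0_3$ subset of $X$.
   Context: A multi-valued function $F: X \Rightarrow Y$ assigns to each $x$ a nonempty set $F(x)\subseteq Y$; its graph is $\{(x,y): y\in F(x)\}\subseteq X\times Y$. $F$ is strongly continuous at $x$ if for every $y \in F(x)$ and every $\varepsilon>0$ there is $\delta>0$ such that for every $x' \in B_p(x,\delta)$ there is $y' \in F(x')$ with $d(y,y')<\varepsilon$. $Y$ is exhaustible by compact sets if there are compact $K_n\subseteq Y$ with $K_n$ contained in the interior of $K_{n+1}$ and $Y=\bigcup_n K_n$. Borel hierarchy: $\Sigma^0_1$ = open; $\Sigma^0_{n+1}$ = countable unions of sets whose complements are $\Sigma^0_k$ for some $k\le n$; $\Pi^0_n$ = complements of $\Sigma^0_n$ ($\Sigma^0_2=F_\sigma$, $\Pi^0_2=G_\delta$, $\Sigma^0_3$ = countable unions of $G_\delta$ sets). *)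

(* Defs.v *)
From HB Require Import structures.
From mathcomp Require Import all_boot all_order all_algebra.
From mathcomp Require Import all_classical all_reals all_analysis.
From mathcomp Require Import borel_hierarchy.
Set Implicit Arguments. Unset Strict Implicit. Unset Printing Implicit Defensive.
Import Order.TTheory GRing.Theory Num.Theory.
Local Open Scope classical_set_scope.
Local Open Scope ring_scope.

Definition graph_mv {X Y : Type} (F : X -> set Y) : set (X * Y) :=
  [set z | F z.1 z.2].

Definition strongly_continuous_at {R : realType} {X Y : metricType R}
  (F : X -> set Y) (x : X) : Prop :=
  forall y, F x y -> forall eps : R, 0 < eps ->
    exists2 delta : R, 0 < delta &
      forall x', mdist x x' < delta -> exists2 y', F x' y' & mdist y y' < eps.

Definition separable_space (T : topologicalType) : Prop :=
  exists2 D : set T, countable D & dense D.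

Definition exhaustible_by_compacts (T : topologicalType) : Prop :=
  exists K : (set T)^nat,
    [/\ forall n, compact (K n),
        forall n, K n `<=` interior (K n.+1) &
        \bigcup_n K n = [set: T]].

(* Sigma^0_3 = countable unions of G_delta sets (Pi^0_2); Pi^0_2 = Gdelta,
   Sigma^0_2 = Fsigma come from borel_hierarchy. *)
Definition Sigma03 (T : topologicalType) (S : set T) : Prop :=
  exists2 G : (set T)^nat, (forall n, Gdelta (G n)) & S = \bigcup_n G n.

(* Main.v *)
Require Import Defs.
From HB Require Import structures.
From mathcomp Require Import all_boot all_order all_algebra.
From mathcomp Require Import all_classical all_reals all_analysis.
From mathcomp Require Import borel_hierarchy.
From mathcomp Require Import lra.
Import Order.TTheory GRing.Theory Num.Theory.
Local Open Scope classical_set_scope.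
Local Open Scope ring_scope.

Lemma natinv_lt (R : realType) (e : R) : 0 < e -> exists n : nat, n.+1%:R^-1 < e.
Proof.
move=> e0; have := near_infty_natSinv_lt (PosNum e0).
case=> N _ /(_ N (leqnn N)) /= H; by exists N.
Qed.

Lemma proj_closed (T U : topologicalType) (C : set (T * U)) (K : set U) :
  closed C -> compact K -> closed [set x | exists2 y, K y & C (x, y)].
Proof.
move=> clC cK x clx.
pose G := filter_from (fun B : set T => nbhs x B)
  (fun B => [set y | K y /\ exists2 x', B x' & C (x', y)]).
have GF : ProperFilter G.
  apply: filter_from_proper.
    apply: filter_from_filter; first by exists setT; exact: filterT.
    move=> P Q Px Qx; exists (P `&` Q); first exact: filterI.
    by move=> y [Ky [x' [Px' Qx'] Cx']]; split; split=> //; exists x'.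
  move=> B Bx; have [x' [[y Ky Cy] Bx']] := clx B Bx.
  by exists y; split=> //; exists x'.
have GK : G K by exists setT; [exact: filterT | move=> y []].
have [y [Ky cly]] := cK G GF GK.
exists y => //; apply: clC => B [[P Q] /= [Px Qy] sPQB].
have GP : G [set y | K y /\ exists2 x', P x' & C (x', y)] by exists P.
have [y' [[Ky' [x' Px' Cx']] Qy']] := cly _ _ GP Qy.
by exists (x', y'); split=> //; apply: sPQB.
Qed.
Definition unp (k : nat) : nat * nat := odflt (0%N, 0%N) (unpickle k).

Lemma bigcup_pair T (G : nat -> nat -> set T) :
  \bigcup_a \bigcup_b G a b = \bigcup_k G (unp k).1 (unp k).2.
Proof.
apply/seteqP; split => x.
  move=> [a _ [b _ Gx]]; exists (pickle (a, b)) => //.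
  by rewrite /unp pickleK.
by move=> [k _ Gx]; exists (unp k).1 => //; exists (unp k).2.
Qed.

Lemma FsigmaU_nat (T : topologicalType) (A : nat -> set T) :
  (forall n, Fsigma (A n)) -> Fsigma (\bigcup_n A n).
Proof.
move=> H; have /choice[G HG] : forall n, exists G : (set T)^nat,
    (forall i, closed (G i)) /\ A n = \bigcup_i G i.
  by move=> n; case: (H n) => G ? ?; exists G.
exists (fun k => G (unp k).1 (unp k).2).
  by move=> k; case: (HG (unp k).1).
rewrite -bigcup_pair; apply: eq_bigcupr => n _.
by case: (HG n) => _ ->.
Qed.

Lemma GdeltaI_nat (T : topologicalType) (A : nat -> set T) :
  (forall n, Gdelta (A n)) -> Gdelta (\bigcap_n A n).
Proof.
move=> H; have /choice[G HG] : forall n, exists G : (set T)^nat,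
    (forall i, open (G i)) /\ A n = \bigcap_i G i.
  by move=> n; case: (H n) => G ? ?; exists G.
exists (fun k => G (unp k).1 (unp k).2).
  by move=> k; case: (HG (unp k).1).
apply: setC_inj; rewrite !setC_bigcap.
rewrite -(@bigcup_pair _ (fun a b : nat => ~` (G a b))).
apply: eq_bigcupr => n _.
by case: (HG n) => _ ->; rewrite setC_bigcap.
Qed.

Lemma closed_le_ball (R : realType) (Y : metricType R) (c : Y) (s : R) :
  closed [set y | mdist c y <= s].
Proof.
move=> y cly; rewrite /= leNgt; apply/negP => sy.
have e0 : 0 < mdist c y - s by rewrite subr_gt0.
have [z [zs]] := cly _ (nbhsx_ballx y _ e0).
rewrite ballEmdist /= => yz.
have := metric_triangle c z y; rewrite (metric_sym z y).
move=> /le_lt_trans /(_ (ler_ltD zs yz)).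
by rewrite addrC subrK ltxx.
Qed.

Lemma preim_Fsigma (R : realType) (X Y : metricType R) (F : X -> set Y)
  (C : (set (X * Y))^nat) (K : (set Y)^nat) (c : Y) (r : R) :
  (forall j, closed (C j)) -> graph_mv F = \bigcup_j C j ->
  (forall m, compact (K m)) -> \bigcup_m K m = setT ->
  Fsigma [set x | exists2 y, F x y & mdist c y < r].
Proof.
move=> clC gC cK KT.
have -> : [set x | exists2 y, F x y & mdist c y < r] =
  \bigcup_j \bigcup_k \bigcup_m
    [set x | exists2 y, (K m `&` [set y | mdist c y <= r - k.+1%:R^-1]) y
       & C j (x, y)].
  apply/seteqP; split => x /=.
    move=> [y Fy cy].
    have : graph_mv F (x, y) by [].
    rewrite gC => -[j _ Cj]; exists j => //.
    have [k kr] : exists k : nat, k.+1%:R^-1 < r - mdist c y.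
      by apply: natinv_lt; rewrite subr_gt0.
    exists k => //.
    have : [set: Y] y by [].
    rewrite -KT => -[m _ Km]; exists m => //.
    exists y => //; split => //=; rewrite lerBrDr addrC -lerBrDr; exact: ltW.
  move=> [j _ [k _ [m _ [y [Km yle] Cj]]]]; exists y.
    by rewrite -[F x y]/(graph_mv F (x, y)) gC; exists j.
  have : 0 < k.+1%:R^-1 :> R by rewrite invr_gt0.
  move: yle => /= yle kp; apply: (le_lt_trans yle); rewrite ltrBlDr ltrDl; exact: kp.
apply: FsigmaU_nat => j; apply: FsigmaU_nat => k; apply: FsigmaU_nat => m.
apply: closed_Fsigma; apply: proj_closed => //.
exact/compact_closedI/closed_le_ball.
Qed.

Lemma main_Gdelta (R : realType) (X Y : metricType R) (F : X -> set Y)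
  (K : (set Y)^nat) :
  separable_space Y -> Fsigma (graph_mv F) ->
  (forall m, compact (K m)) -> \bigcup_m K m = setT ->
  Gdelta [set x | strongly_continuous_at F x].
Proof.
move=> [D cD dD] [C clC gC] cK KT.
have [f finj] := countable_injP D cD.
pose A (c : Y) (n : nat) :=
  [set x | exists2 y, F x y & mdist c y < n.+1%:R^-1].
pose Q c n := ~` A c n `|` interior (A c n).
have GQ : forall c n, Gdelta (Q c n).
  move=> c n; have [B clB AB] := @preim_Fsigma R X Y F C K c (n.+1%:R^-1) clC gC cK KT.
  have AB' : A c n = \bigcup_i B i := AB.
  rewrite /Q AB'.
  exists (fun i => ~` B i `|` interior (\bigcup_i B i)).
    by move=> i; apply: openU; [exact: closed_openC | exact: open_interior].
  rewrite setC_bigcup; apply/seteqP; split => x.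
    by move=> [H | H] i _; [left; exact: H | right].
  move=> H; case: (pselect (interior (\bigcup_i B i) x)) => [h|h]; [right|left] => //.
  by move=> i _; case: (H i Logic.I).
have -> : [set x | strongly_continuous_at F x] =
  \bigcap_k \bigcap_n [set x | forall c, D c -> f c = k -> Q c n x].
  apply/seteqP; split => x.
    move=> sc k _ n _ c Dc fc; rewrite /Q.
    case: (pselect (A c n x)) => [[y Fy cy]|nA]; last by left.
    right; rewrite /interior /=; apply/nbhs_ballP.
    have e0 : 0 < n.+1%:R^-1 - mdist c y by rewrite subr_gt0.
    have [d d0 Hd] := sc y Fy _ e0.
    exists d => // x'; rewrite ballEmdist /= => xx'.
    have [y' Fy' yy'] := Hd x' xx'.
    exists y' => //; apply: le_lt_trans (metric_triangle c y y') _.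
    by rewrite addrC -ltrBrDr.
  move=> H y Fy e e0.
  have e20 : 0 < e / 2 by rewrite divr_gt0.
  have [n hn] := @natinv_lt R _ e20.
  have r0 : 0 < n.+1%:R^-1 :> R by rewrite invr_gt0.
  have [c [Oc Dc]] := dD (interior (ball y n.+1%:R^-1)) (ex_intro _ y (nbhsx_ballx y _ r0)) (@open_interior _ (ball y n.+1%:R^-1)).
  have yc : mdist y c < n.+1%:R^-1.
    by move: (nbhs_singleton Oc); rewrite ballEmdist.
  case: (H (f c) Logic.I n Logic.I c Dc erefl) => [nA | iA].
    by exfalso; apply: nA; exists y => //; rewrite metric_sym.
  move: iA => /nbhs_ballP [d d0 Hd].
  exists d => // x' xx'.
  have [y' Fy' cy'] : exists2 y', F x' y' & mdist c y' < n.+1%:R^-1 by apply: Hd; rewrite ballEmdist.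
  exists y' => //; apply: le_lt_trans (metric_triangle y c y') _.
  apply: lt_le_trans (ltrD yc cy') _.
  by rewrite [e in _ <= e]splitr; apply/ltW/ltrD.
apply: GdeltaI_nat => k; apply: GdeltaI_nat => n.
case: (pselect (exists c, D c /\ f c = k)) => [[c [Dc fc]]|nc].
  have -> : [set x | forall c, D c -> f c = k -> Q c n x] = Q c n; last exact: GQ.
  apply/seteqP; split => x; first by move=> H; exact: H.
  move=> Qx c' Dc' fc'.
  have -> : c' = c by apply: finj; rewrite ?inE // fc fc'.
  exact: Qx.
apply: open_Gdelta.
have -> : [set x | forall c, D c -> f c = k -> Q c n x] = setT; last exact: openT.
by apply/seteqP; split => // x _ c Dc fc; exfalso; apply: nc; exists c.
Qed.

Theorem theorem3p2 (R : realType) (X Y : metricType R) (F : X -> set Y) :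
  separable_space Y ->
  (forall x, F x !=set0) ->
  Fsigma (graph_mv F) ->
  (compact [set: Y] -> (forall x, closed (F x)) ->
     Gdelta [set x | strongly_continuous_at F x]) /\
  (exhaustible_by_compacts Y -> (forall x, closed (F x)) ->
     Sigma03 [set x | strongly_continuous_at F x]).
Proof.
move=> sep _ gF; split.
  move=> cY _; apply: (@main_Gdelta R X Y F (fun _ => setT)) => //.
  by rewrite bigcup_const //; exists 0%N.
move=> [K [cK _ KT]] _.
exists (fun _ => [set x | strongly_continuous_at F x]).
  by move=> _; exact: (@main_Gdelta R X Y F K).
by rewrite bigcup_const //; exists 0%N.
Qed.
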